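(* Let $U$ be a projection family and let $\Phi$ be a Følner sequence in $\mathbb{N}$. For every $f\in L^2(\mathbb{N},\Phi)$ there exist a subsequence $\Psi$ of $\Phi$ and $f_U\in U(\Psi)$ such that: (1) $f-f_U\in U(\Psi)^\perp$; (2) $\|f-f_U\|_\Psi=\inf\{\|f-g\|_\Psi: g\in U(\Psi)\}$; (3) if $f$ takes values in an interval $[a,b]$ then $f_U$ takes values in $[a,b]$.
   Context: A Følner sequence in $\mathbb{N}$ is a sequence $\Phi\colon N\mapsto\Phi_N$ of finite non-empty subsets of $\mathbb{N}$ with $|(\Phi_N+m)\triangle\Phi_N|/|\Phi_N|\to0$ for all $m\in\mathbb{N}$. $\|f\|_\Phi=\big(\limsup_{N\to\infty}\frac{1}{|\Phi_N|}\sum_{n\in\Phi_N}|f(n)|^2\big)^{1/2}$, $L^2(\mathbb{N},\Phi)=\{f\colon\mathbb{N}\to\mathbb{C}:\|f\|_\Phi<\infty\}$, and $\langle f,h\rangle_\Phi=\lim_{N\to\infty}\frac{1}{|\Phi_N|}\sum_{n\in\Phi_N}f(n)\overline{h(n)}$ when the limit exists. A projection family is an assignment $\Phi\mapsto U(\Phi)$, defined for every Følner sequence $\Phi$, such that: $U(\Phi)$ is a vector subspace of $L^2(\mathbb{N},\Phi)$; $U(\Phi)$ contains the constant functions and is closed under pointwise complex conjugation; $\langle u,v\rangle_\Phi$ exists for all $u,v\in U(\Phi)$; if $u,v\in U(\Phi)$ are real-valued then $n\mapsto\max\{u(n),v(n)\}$ is in $U(\Phi)$; $U(\Phi)$ is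 closed in the topology induced by $\|\cdot\|_\Phi$; and if $\Psi$ eventually agrees with a subsequence of $\Phi$ then $U(\Psi)\supset U(\Phi)$. For such $U$, $U(\Phi)^\perp=\{v\in L^2(\mathbb{N},\Phi): \langle u,v\rangle_\Phi \text{ exists and equals } 0 \text{ for all } u\in U(\Phi)\}$. *)

(* Defs.v *)
From Stdlib Require Import Reals List Arith.
From Coquelicot Require Import Coquelicot.
Open Scope R_scope.

(* A finite subset of N is represented by a duplicate-free list. *)
Definition seq_sets := nat -> list nat.

Definition memb (x : nat) (l : list nat) : bool := existsb (Nat.eqb x) l.

Definition symdiff_card (A B : list nat) : nat :=
  length (filter (fun x => negb (memb x B)) A) +
  length (filter (fun x => negb (memb x A)) B).

Definition shift (A : list nat) (m : nat) : list nat := map (fun n => (n + m)%nat) A.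

Definition Folner (Phi : seq_sets) : Prop :=
  (forall N, NoDup (Phi N) /\ Phi N <> nil) /\
  (forall m : nat,
     is_lim_seq (fun N => INR (symdiff_card (shift (Phi N) m) (Phi N)) / INR (length (Phi N))) 0).

Definition avgR (Phi : seq_sets) (g : nat -> R) (N : nat) : R :=
  fold_right Rplus 0 (map g (Phi N)) / INR (length (Phi N)).

Definition avgC (Phi : seq_sets) (g : nat -> C) (N : nat) : C :=
  Cdiv (fold_right Cplus (RtoC 0) (map g (Phi N))) (RtoC (INR (length (Phi N)))).

Definition sqnorm_limsup (Phi : seq_sets) (f : nat -> C) : Rbar :=
  LimSup_seq (avgR Phi (fun n => (Cmod (f n)) ^ 2)).

Definition L2 (Phi : seq_sets) (f : nat -> C) : Prop :=
  Rbar_lt (sqnorm_limsup Phi f) p_infty.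

(* ||f||_Phi (meaningful for f in L^2(N,Phi)) *)
Definition normPhi (Phi : seq_sets) (f : nat -> C) : R :=
  sqrt (real (sqnorm_limsup Phi f)).

Definition is_inner (Phi : seq_sets) (f h : nat -> C) (z : C) : Prop :=
  filterlim (avgC Phi (fun n => Cmult (f n) (Cconj (h n)))) eventually (locally z).

Definition inner_exists (Phi : seq_sets) (f h : nat -> C) : Prop :=
  exists z, is_inner Phi f h z.

Definition real_valued (f : nat -> C) : Prop := forall n, Im (f n) = 0.

Definition ev_agrees_subseq (Psi Phi : seq_sets) : Prop :=
  exists (phi : nat -> nat) (N0 : nat),
    (forall k, (phi k < phi (S k))%nat) /\
    (forall N, (N0 <= N)%nat -> forall n, In n (Psi N) <-> In n (Phi (phi N))).

Definition projection_family (U : seq_sets -> (nat -> C) -> Prop) : Prop :=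
  (forall Phi, Folner Phi ->
     (forall f, U Phi f -> L2 Phi f) /\
     U Phi (fun _ => RtoC 0) /\
     (forall f g, U Phi f -> U Phi g -> U Phi (fun n => Cplus (f n) (g n))) /\
     (forall (c : C) f, U Phi f -> U Phi (fun n => Cmult c (f n))) /\
     (forall c : C, U Phi (fun _ => c)) /\
     (forall f, U Phi f -> U Phi (fun n => Cconj (f n))) /\
     (forall u v, U Phi u -> U Phi v -> inner_exists Phi u v) /\
     (forall u v, U Phi u -> U Phi v -> real_valued u -> real_valued v ->
        U Phi (fun n => RtoC (Rmax (Re (u n)) (Re (v n))))) /\
     (forall f, L2 Phi f ->
        (forall eps, 0 < eps -> exists u, U Phi u /\
            normPhi Phi (fun n => Cminus (f n) (u n)) < eps) ->
        U Phi f)) /\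
  (forall Phi Psi, Folner Phi -> Folner Psi -> ev_agrees_subseq Psi Phi ->
     forall f, U Phi f -> U Psi f).

Definition in_perp (U : seq_sets -> (nat -> C) -> Prop) (Phi : seq_sets) (v : nat -> C) : Prop :=
  L2 Phi v /\ forall u, U Phi u -> is_inner Phi u v (RtoC 0).

(* Main.v *)
Require Import Defs.
From Stdlib Require Import Reals List Arith Lia Lra Psatz ClassicalEpsilon Classical FunctionalExtensionality.
From Coquelicot Require Import Coquelicot.
Open Scope R_scope.


Definition sub (phi : nat -> nat) := forall k, (phi k < phi (S k))%nat.
Definition subs (Psi : seq_sets) (s : nat -> nat) : seq_sets := fun N => Psi (s N).

Lemma sub_lt phi : sub phi -> forall a b, (a < b)%nat -> (phi a < phi b)%nat.
Proof. intros H a b Hab. induction Hab. apply H. specialize (H m). lia. Qed.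

Lemma sub_le phi : sub phi -> forall a b, (a <= b)%nat -> (phi a <= phi b)%nat.
Proof. intros H a b Hab. destruct (Nat.eq_dec a b). subst; lia.
  assert (a < b)%nat by lia. pose proof (sub_lt phi H a b H0). lia. Qed.

Lemma sub_ge phi : sub phi -> forall n, (n <= phi n)%nat.
Proof. intros H n. induction n. lia. specialize (H n). lia. Qed.

Lemma sub_comp a b : sub a -> sub b -> sub (fun n => a (b n)).
Proof. intros Ha Hb k. apply sub_lt; auto. Qed.

Lemma sub_id : sub (fun n => n).
Proof. intro k; lia. Qed.

Lemma Folner_sub Phi s : Folner Phi -> sub s -> Folner (subs Phi s).
Proof.
  intros [H1 H2] Hs. split. intro N. apply H1.
  intro m. unfold subs.
  apply (is_lim_seq_subseq (fun N => INR (symdiff_card (shift (Phi N) m) (Phi N)) / INR (length (Phi N))) 0 s); [|apply H2].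
  intros P [M HM]. exists M. intros n Hn. apply HM. pose proof (sub_ge s Hs n). lia.
Qed.

Lemma list_max_in (l : list nat) : l <> nil -> exists M, In M l /\ forall x, In x l -> (x <= M)%nat.
Proof.
  induction l as [|a l IH]; intros H. congruence.
  destruct l as [|b l'].
  - exists a. split. left; auto. intros x [<-|[]]. lia.
  - destruct IH as [M [HM1 HM2]]. discriminate.
    destruct (Nat.le_gt_cases a M).
    + exists M. split. right; auto. intros x [<-|Hx]. lia. auto.
    + exists a. split. left; auto. intros x [<-|Hx]. lia. specialize (HM2 x Hx). lia.
Qed.

Lemma memb_In x l : memb x l = true <-> In x l.
Proof.
  unfold memb. rewrite existsb_exists. split.
  intros [y [Hy Hxy]]. apply Nat.eqb_eq in Hxy. subst; auto.
  intros H. exists x. split; auto. apply Nat.eqb_refl.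
Qed.

Lemma symdiff_ge1 A : A <> nil -> (1 <= symdiff_card (shift A 1) A)%nat.
Proof.
  intros HA. destruct (list_max_in A HA) as [M [HM1 HM2]].
  unfold symdiff_card.
  assert (Hin : In (M + 1)%nat (filter (fun x => negb (memb x A)) (shift A 1))).
  { apply filter_In. split. unfold shift. apply in_map_iff. exists M. split; auto.
    destruct (memb (M+1) A) eqn:E; auto. apply memb_In in E. specialize (HM2 _ E). lia. }
  destruct (filter (fun x => negb (memb x A)) (shift A 1)). destruct Hin. simpl. lia.
Qed.

Lemma len_pos Psi N : Folner Psi -> 0 < INR (length (Psi N)).
Proof.
  intros [H _]. destruct (H N) as [_ Hn]. destruct (Psi N). congruence.
  simpl length. apply lt_0_INR. lia.
Qed.

Lemma Folner_len Psi : Folner Psi -> forall K, exists M, forall N, (M <= N)%nat -> K <= INR (length (Psi N)).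
Proof.
  intros HF K. pose proof HF as [H1 H2]. specialize (H2 1%nat).
  apply is_lim_seq_spec in H2. simpl in H2.
  assert (Hp : 0 < / (Rabs K + 1)). { apply Rinv_0_lt_compat. pose proof (Rabs_pos K). lra. }
  destruct (H2 (mkposreal _ Hp)) as [M HM]. exists M. intros N HN. specialize (HM N HN). simpl in HM.
  pose proof (len_pos Psi N HF) as Hl.
  pose proof (symdiff_ge1 (Psi N) (proj2 (H1 N))) as Hs. apply le_INR in Hs. simpl in Hs.
  set (L := INR (length (Psi N))) in *. set (Sd := INR (symdiff_card _ _)) in *.
  rewrite Rminus_0_r in HM. rewrite Rabs_right in HM.
  2:{ apply Rle_ge. unfold Rdiv. apply Rmult_le_pos. lra. left; apply Rinv_0_lt_compat; lra. }
  assert (1 / L < / (Rabs K + 1)). { apply Rle_lt_trans with (Sd / L); auto. unfold Rdiv. apply Rmult_le_compat_r. left; apply Rinv_0_lt_compat; lra. lra. }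
  assert (Rabs K + 1 < L).
  { apply Rinv_lt_cancel. lra. unfold Rdiv in H. rewrite Rmult_1_l in H. auto. }
  pose proof (Rle_abs K). lra.
Qed.


Definition sumR (l : list nat) (g : nat -> R) : R := fold_right Rplus 0 (map g l).

Lemma sumR_lin l a b g h : sumR l (fun n => a * g n + b * h n) = a * sumR l g + b * sumR l h.
Proof. unfold sumR; induction l; simpl. ring. rewrite IHl. ring. Qed.

Lemma sumR_plus l g h : sumR l (fun n => g n + h n) = sumR l g + sumR l h.
Proof. unfold sumR; induction l; simpl. ring. rewrite IHl. ring. Qed.

Lemma sumR_le l g h : (forall n, In n l -> g n <= h n) -> sumR l g <= sumR l h.
Proof. induction l; intros H; unfold sumR in *; simpl. lra.
  apply Rplus_le_compat. apply H; left; auto. apply IHl. intros; apply H; right; auto. Qed.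

Lemma sumR_ext l g h : (forall n, In n l -> g n = h n) -> sumR l g = sumR l h.
Proof. induction l; intros H; unfold sumR in *; simpl. lra.
  rewrite (H a (or_introl eq_refl)). rewrite IHl; auto. intros; apply H; right; auto. Qed.

Lemma sumR_nonneg l g : (forall n, 0 <= g n) -> 0 <= sumR l g.
Proof. induction l; intros H; unfold sumR in *; simpl. lra. specialize (IHl H). specialize (H a). lra. Qed.

Lemma sumR_member l g x : (forall n, 0 <= g n) -> In x l -> g x <= sumR l g.
Proof. induction l; intros H Hx; unfold sumR in *; simpl. destruct Hx.
  destruct Hx as [<-|Hx]. pose proof (sumR_nonneg l g H). unfold sumR in H0. lra.
  specialize (IHl H Hx). specialize (H a). lra. Qed.

Lemma sumR_app l1 l2 g : sumR (l1 ++ l2) g = sumR l1 g + sumR l2 g.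
Proof. induction l1; unfold sumR in *; simpl. ring. rewrite IHl1. ring. Qed.

Lemma sumR_ind S O X : NoDup S -> (forall n, 0 <= X n) ->
  sumR S (fun n => if memb n O then X n else 0) <= sumR O X.
Proof.
  intros HS HX. revert O. induction HS as [|a S Ha HS IH]; intros O.
  - unfold sumR; simpl. apply sumR_nonneg; auto.
  - change (sumR (a :: S) ?G) with (G a + sumR S G). cbv beta.
    destruct (memb a O) eqn:E.
    + apply memb_In in E. apply in_split in E. destruct E as [O1 [O2 ->]].
      rewrite (sumR_ext S _ (fun n => if memb n (O1 ++ O2) then X n else 0)).
      * specialize (IH (O1 ++ O2)). rewrite sumR_app in *. change (sumR (a :: O2) X) with (X a + sumR O2 X). lra.
      * intros n Hn. assert (n <> a) by (intro; subst; contradiction).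
        destruct (memb n (O1 ++ a :: O2)) eqn:E1; destruct (memb n (O1 ++ O2)) eqn:E2; auto.
        -- apply memb_In in E1. assert (memb n (O1 ++ O2) = true); [|congruence]. apply memb_In.
           apply in_app_or in E1. apply in_or_app. destruct E1 as [?|[?|?]]; auto. congruence.
        -- apply memb_In in E2. assert (memb n (O1 ++ a :: O2) = true); [|congruence]. apply memb_In.
           apply in_app_or in E2. apply in_or_app. destruct E2; auto. right; right; auto.
    + specialize (IH O). lra.
Qed.

Lemma sumR_seq_member k F i : (forall j, 0 <= F j) -> (i < k)%nat -> F i <= sumR (seq 0 k) F.
Proof. intros H Hi. apply sumR_member; auto. apply in_seq. lia. Qed.

Lemma avgR_eq Psi g N : avgR Psi g N = sumR (Psi N) g / INR (length (Psi N)).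
Proof. reflexivity. Qed.

Lemma avg_lin Psi a b g h N : avgR Psi (fun n => a * g n + b * h n) N = a * avgR Psi g N + b * avgR Psi h N.
Proof. rewrite !avgR_eq, sumR_lin. unfold Rdiv. ring. Qed.

Lemma avg_lin3 Psi a b c X Y Z N :
  avgR Psi (fun n => a * X n + b * Y n + c * Z n) N = a * avgR Psi X N + b * avgR Psi Y N + c * avgR Psi Z N.
Proof.
  rewrite (avgR_eq Psi (fun n => _ + _)).
  rewrite (sumR_ext _ _ (fun n => 1 * (a * X n + b * Y n) + c * Z n)) by (intros; ring).
  rewrite sumR_lin, sumR_lin. rewrite !avgR_eq. unfold Rdiv. ring.
Qed.

Lemma avg_le Psi g h N : (forall n, In n (Psi N) -> g n <= h n) -> avgR Psi g N <= avgR Psi h N.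
Proof. intros H. rewrite !avgR_eq. unfold Rdiv. apply Rmult_le_compat_r.
  destruct (Req_dec (INR (length (Psi N))) 0) as [E|E]. rewrite E, Rinv_0. lra.
  left. apply Rinv_0_lt_compat. pose proof (pos_INR (length (Psi N))). lra.
  apply sumR_le; auto. Qed.

Lemma avg_ext Psi g h N : (forall n, g n = h n) -> avgR Psi g N = avgR Psi h N.
Proof. intros H. rewrite !avgR_eq. rewrite (sumR_ext _ g h); auto. Qed.

Lemma avg_nonneg Psi g N : (forall n, 0 <= g n) -> 0 <= avgR Psi g N.
Proof. intros H. rewrite avgR_eq. unfold Rdiv.
  destruct (Req_dec (INR (length (Psi N))) 0) as [E|E]. rewrite E, Rinv_0. lra.
  apply Rmult_le_pos. apply sumR_nonneg; auto.
  left. apply Rinv_0_lt_compat. pose proof (pos_INR (length (Psi N))). lra. Qed.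

Lemma Cmod2 z : Cmod z ^ 2 = fst z ^ 2 + snd z ^ 2.
Proof. unfold Cmod. rewrite pow2_sqrt. ring. nra. Qed.

Definition sq (v : nat -> C) : nat -> R := fun n => Cmod (v n) ^ 2.

Lemma sq_nonneg v n : 0 <= sq v n.
Proof. unfold sq. rewrite Cmod2. nra. Qed.

Definition EvLe (Psi : seq_sets) (v : nat -> C) (c : R) :=
  forall eps, 0 < eps -> exists M, forall N, (M <= N)%nat -> avgR Psi (sq v) N <= c + eps.

Definition sqv (Psi : seq_sets) (v : nat -> C) : R := real (sqnorm_limsup Psi v).

Lemma normPhi_sqv Psi v : normPhi Psi v = sqrt (sqv Psi v).
Proof. reflexivity. Qed.

Lemma L2_EvLe Psi v : L2 Psi v -> EvLe Psi v (sqv Psi v) /\ 0 <= sqv Psi v.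
Proof.
  unfold L2, sqv, sqnorm_limsup, LimSup_seq.
  destruct (ex_LimSup_seq _) as [l Hl]; simpl. intros HL.
  destruct l as [l| |]; simpl in HL |- *; try contradiction.
  - split.
    + intros eps Heps. destruct (Hl (mkposreal _ Heps)) as [_ [M HM]]. exists M. intros N HN.
      specialize (HM N HN). cbn [pos] in HM. left. apply HM.
    + destruct (Rle_or_lt 0 l) as [?|Hneg]; auto.
      assert (Hp : 0 < - l / 2) by lra.
      destruct (Hl (mkposreal _ Hp)) as [_ [M HM]]. specialize (HM M (Nat.le_refl _)). cbn [pos] in HM.
      pose proof (avg_nonneg Psi (sq v) M (sq_nonneg v)). unfold sq in H. lra.
  - destruct (Hl 0) as [M HM]. specialize (HM M (Nat.le_refl _)).
    pose proof (avg_nonneg Psi (sq v) M (sq_nonneg v)). unfold sq in H. lra.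
Qed.

Lemma EvLe_L2 Psi v c : EvLe Psi v c -> L2 Psi v /\ sqv Psi v <= c.
Proof.
  unfold L2, sqv, sqnorm_limsup, LimSup_seq.
  destruct (ex_LimSup_seq _) as [l Hl]; simpl. intros HE.
  destruct l as [l| |]; simpl.
  - split; auto. destruct (Rle_or_lt l c) as [?|Hlt]; auto.
    assert (Hp : 0 < (l - c) / 2) by lra.
    destruct (HE _ Hp) as [M HM]. destruct (Hl (mkposreal _ Hp)) as [H1 _]. cbn [pos] in H1.
    destruct (H1 M) as [n [Hn Hn2]]. specialize (HM n Hn). unfold sq in HM. lra.
  - exfalso. destruct (HE 1 Rlt_0_1) as [M HM]. destruct (Hl (c + 1) M) as [n [Hn Hn2]].
    specialize (HM n Hn). unfold sq in HM. lra.
  - exfalso. destruct (Hl 0) as [M HM]. specialize (HM M (Nat.le_refl _)).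
    pose proof (avg_nonneg Psi (sq v) M (sq_nonneg v)). unfold sq in H. lra.
Qed.

Lemma EvLe_comb Psi x a b ca cb al be : EvLe Psi a ca -> EvLe Psi b cb -> 0 <= al -> 0 <= be ->
  (forall n, sq x n <= al * sq a n + be * sq b n) -> EvLe Psi x (al * ca + be * cb).
Proof.
  intros Ha Hb Hal Hbe Hx eps Heps.
  assert (Hp : 0 < eps / (al + be + 1)). { apply Rdiv_lt_0_compat; lra. }
  destruct (Ha _ Hp) as [M1 HM1]. destruct (Hb _ Hp) as [M2 HM2].
  exists (Nat.max M1 M2). intros N HN.
  eapply Rle_trans. apply avg_le. intros n _. apply Hx.
  rewrite avg_lin. specialize (HM1 N ltac:(lia)). specialize (HM2 N ltac:(lia)).
  set (e := eps / (al + be + 1)) in *.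
  assert (He : e * (al + be + 1) = eps). { unfold e. field. lra. }
  nra.
Qed.

Lemma EvLe_mono Psi v c c' : c <= c' -> EvLe Psi v c -> EvLe Psi v c'.
Proof. intros Hc H eps Heps. destruct (H eps Heps) as [M HM]. exists M. intros N HN. specialize (HM N HN). lra. Qed.

Lemma EvLe_sub Psi Psi' v c th N0 : EvLe Psi v c -> sub th ->
  (forall N, (N0 <= N)%nat -> Psi' N = Psi (th N)) -> EvLe Psi' v c.
Proof.
  intros H Hth HE eps Heps. destruct (H eps Heps) as [M HM]. exists (Nat.max M N0).
  intros N HN. rewrite avgR_eq, HE by lia. rewrite <- avgR_eq. apply HM.
  pose proof (sub_ge th Hth N). lia.
Qed.

Lemma L2_sub Psi Psi' v th N0 : L2 Psi v -> sub th ->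
  (forall N, (N0 <= N)%nat -> Psi' N = Psi (th N)) -> L2 Psi' v /\ sqv Psi' v <= sqv Psi v.
Proof.
  intros HL Hth HE. apply EvLe_L2. apply (EvLe_sub Psi Psi' v _ th N0); auto. apply L2_EvLe; auto.
Qed.

Lemma L2_comb Psi x a b al be : L2 Psi a -> L2 Psi b -> 0 <= al -> 0 <= be ->
  (forall n, sq x n <= al * sq a n + be * sq b n) -> L2 Psi x /\ sqv Psi x <= al * sqv Psi a + be * sqv Psi b.
Proof.
  intros Ha Hb Hal Hbe Hx. apply EvLe_L2. apply EvLe_comb with a b; auto; apply L2_EvLe; auto.
Qed.

Lemma sqrt_lt_sq s e : s < e ^ 2 -> 0 < e -> sqrt s < e.
Proof. intros H He. destruct (Rle_or_lt 0 s).
  rewrite <- (sqrt_pow2 e) by lra. apply sqrt_lt_1; nra.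
  rewrite sqrt_neg_0 by lra. auto. Qed.

Lemma sqrt_ge_sq s d : 0 <= s -> 0 <= d -> d <= sqrt s -> d ^ 2 <= s.
Proof. intros Hs Hd H. rewrite <- (pow2_sqrt s) by auto. pose proof (sqrt_pos s). nra. Qed.

Lemma sqrt_le_sq s d : s <= d ^ 2 -> 0 <= d -> sqrt s <= d.
Proof. intros H Hd. destruct (Rle_or_lt 0 s).
  rewrite <- (sqrt_pow2 d) by lra. apply sqrt_le_1; nra.
  rewrite sqrt_neg_0 by lra. auto. Qed.

Lemma sqrt_lt_sq_inv s d : 0 <= s -> 0 <= d -> sqrt s < d -> s < d ^ 2.
Proof. intros Hs Hd H. rewrite <- (pow2_sqrt s) by auto. pose proof (sqrt_pos s). nra. Qed.

Lemma IO_sub (P : nat -> Prop) : (forall M, exists N, (M <= N)%nat /\ P N) -> exists r, sub r /\ forall k, P (r k).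
Proof.
  intros H.
  assert (c : forall M, {N | (M <= N)%nat /\ P N}). { intro M. apply constructive_indefinite_description. auto. }
  set (r := fix r k := match k with 0 => proj1_sig (c 0%nat) | S k' => proj1_sig (c (S (r k'))) end).
  exists r. split.
  - intro k. change (r k < proj1_sig (c (S (r k))))%nat. pose proof (proj2_sig (c (S (r k)))) as [HN _]. lia.
  - intro k. destruct k. exact (proj2 (proj2_sig (c 0%nat))). exact (proj2 (proj2_sig (c (S (r k))))).
Qed.

Lemma inf_exists (E : R -> Prop) : (exists x, E x) -> (forall x, E x -> 0 <= x) ->
  exists m, 0 <= m /\ (forall x, E x -> m <= x) /\ (forall eps, 0 < eps -> exists x, E x /\ x < m + eps).
Proof.
  intros [x0 Hx0] Hpos.
  destruct (completeness (fun y => E (- y))) as [s [Hs1 Hs2]].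
  { exists 0. intros y Hy. specialize (Hpos _ Hy). lra. }
  { exists (- x0). rewrite Ropp_involutive. auto. }
  exists (- s). split; [|split].
  - assert (s <= 0). { apply Hs2. intros y Hy. specialize (Hpos _ Hy). lra. } lra.
  - intros x Hx. assert (- x <= s). { apply Hs1. rewrite Ropp_involutive; auto. } lra.
  - intros eps Heps. apply NNPP. intros Hn.
    assert (s <= s - eps). { apply Hs2. intros y Hy. destruct (Rle_or_lt y (s - eps)); auto.
      exfalso. apply Hn. exists (- y). split; auto. lra. } lra.
Qed.

Lemma e_small d : forall eps, 0 < eps -> exists M, forall k, (M <= k)%nat -> d * / (INR k + 1) <= eps.
Proof.
  intros eps Heps. destruct (INR_archimed eps (Rabs d) Heps) as [M HM].
  exists M. intros k Hk. apply le_INR in Hk.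
  assert (Hk1 : 0 < INR k + 1) by (pose proof (pos_INR k); lra).
  apply Rmult_le_reg_r with (INR k + 1); auto. rewrite Rmult_assoc, Rinv_l by lra.
  pose proof (Rle_abs d). nra.
Qed.

Lemma ev_forall_lt (P : nat -> nat -> Prop) k :
  (forall j, (j < k)%nat -> exists M, forall N, (M <= N)%nat -> P j N) ->
  exists M, forall N, (M <= N)%nat -> forall j, (j < k)%nat -> P j N.
Proof.
  induction k; intros H. exists 0%nat. intros; lia.
  destruct IHk as [M1 HM1]. intros; apply H; lia.
  destruct (H k (Nat.lt_succ_diag_r k)) as [M2 HM2]. exists (Nat.max M1 M2).
  intros N HN j Hj. destruct (Nat.eq_dec j k). subst. apply HM2; lia. apply HM1; lia.
Qed.



Lemma PF_L2 U Psi g : projection_family U -> Folner Psi -> U Psi g -> L2 Psi g.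
Proof. intros [H _] HF; pose proof (H Psi HF) as (?&?&?&?&?&?&?&?&?); eauto. Qed.
Lemma PF_add U Psi a b : projection_family U -> Folner Psi -> U Psi a -> U Psi b -> U Psi (fun n => Cplus (a n) (b n)).
Proof. intros [H _] HF; pose proof (H Psi HF) as (?&?&?&?&?&?&?&?&?); eauto. Qed.
Lemma PF_scal U Psi c a : projection_family U -> Folner Psi -> U Psi a -> U Psi (fun n => Cmult c (a n)).
Proof. intros [H _] HF; pose proof (H Psi HF) as (?&?&?&?&?&?&?&?&?); eauto. Qed.
Lemma PF_const U Psi c : projection_family U -> Folner Psi -> U Psi (fun _ => c).
Proof. intros [H _] HF; pose proof (H Psi HF) as (?&?&?&?&?&?&?&?&?); eauto. Qed.
Lemma PF_conj U Psi a : projection_family U -> Folner Psi -> U Psi a -> U Psi (fun n => Cconj (a n)).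
Proof. intros [H _] HF; pose proof (H Psi HF) as (?&?&?&?&?&?&?&?&?); eauto. Qed.
Lemma PF_max U Psi a b : projection_family U -> Folner Psi -> U Psi a -> U Psi b -> real_valued a -> real_valued b ->
  U Psi (fun n => RtoC (Rmax (Re (a n)) (Re (b n)))).
Proof. intros [H _] HF; pose proof (H Psi HF) as (?&?&?&?&?&?&?&?&?); eauto. Qed.
Lemma PF_closed U Psi g : projection_family U -> Folner Psi -> L2 Psi g ->
  (forall eps, 0 < eps -> exists u, U Psi u /\ normPhi Psi (fun n => Cminus (g n) (u n)) < eps) -> U Psi g.
Proof. intros [H _] HF; pose proof (H Psi HF) as (?&?&?&?&?&?&?&?&?); eauto. Qed.

Lemma PF_sub U Psi Psi' th N0 g : projection_family U -> Folner Psi -> Folner Psi' -> sub th ->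
  (forall N, (N0 <= N)%nat -> Psi' N = Psi (th N)) -> U Psi g -> U Psi' g.
Proof.
  intros [_ H] HF HF' Hth HE Hg. apply (H Psi Psi' HF HF'); auto.
  exists th, N0. split; auto. intros N HN n. rewrite HE; auto. tauto.
Qed.

Lemma PF_comp U Psi s g : projection_family U -> Folner Psi -> sub s -> U Psi g -> U (subs Psi s) g.
Proof. intros PF HF Hs. apply (PF_sub U Psi (subs Psi s) s 0%nat); auto. apply Folner_sub; auto. Qed.

Lemma L2_comp Psi s v : L2 Psi v -> sub s -> L2 (subs Psi s) v /\ sqv (subs Psi s) v <= sqv Psi v.
Proof. intros H Hs. apply (L2_sub Psi _ v s 0%nat); auto. Qed.

Lemma sq_minus_le a b n : sq (fun n => Cminus (a n) (b n)) n <= 2 * sq a n + 2 * sq b n.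
Proof. unfold sq. rewrite !Cmod2. destruct (a n) as [a1 a2], (b n) as [b1 b2]. simpl. pose proof (pow2_ge_0 (a1+b1)); pose proof (pow2_ge_0 (a2+b2)). nra. Qed.

Lemma L2_minus Psi a b : L2 Psi a -> L2 Psi b -> L2 Psi (fun n => Cminus (a n) (b n)).
Proof. intros Ha Hb. apply (L2_comb Psi _ a b 2 2); auto; try lra. apply sq_minus_le. Qed.

Definition Stable U (f : nat -> C) Psi d := forall r, sub r -> forall g, U (subs Psi r) g ->
  d <= normPhi (subs Psi r) (fun n => Cminus (f n) (g n)).

Lemma Stable_comp U f Psi d s : Stable U f Psi d -> sub s -> Stable U f (subs Psi s) d.
Proof. intros H Hs r Hr g Hg. exact (H (fun n => s (r n)) (sub_comp s r Hs Hr) g Hg). Qed.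

Lemma LB U f Psi d u : projection_family U -> Folner Psi -> L2 Psi f -> Stable U f Psi d -> 0 <= d -> U Psi u ->
  forall eps, 0 < eps -> exists M, forall N, (M <= N)%nat -> d^2 - eps <= avgR Psi (sq (fun n => Cminus (f n) (u n))) N.
Proof.
  intros PF HF Hf HS Hd Hu eps Heps.
  apply NNPP. intro Hn.
  assert (HIO : forall M, exists N, (M <= N)%nat /\ avgR Psi (sq (fun n => Cminus (f n) (u n))) N < d^2 - eps).
  { intro M. apply NNPP. intro H2. apply Hn. exists M. intros N HN. apply Rnot_lt_le. intro H3. apply H2. exists N. auto. }
  destruct (IO_sub _ HIO) as [r [Hr Hr2]].
  assert (Hu' : U (subs Psi r) u) by (apply PF_comp; auto).
  assert (HE : EvLe (subs Psi r) (fun n => Cminus (f n) (u n)) (d^2 - eps)).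
  { intros e He. exists 0%nat. intros N _. specialize (Hr2 N). unfold avgR, subs in *. lra. }
  apply EvLe_L2 in HE. destruct HE as [HL Hle].
  pose proof (proj2 (L2_EvLe _ _ HL)) as Hpos.
  specialize (HS r Hr u Hu'). rewrite normPhi_sqv in HS.
  apply sqrt_ge_sq in HS; auto. lra.
Qed.

Lemma fst_fold g l : fst (fold_right Cplus (RtoC 0) (map g l)) = sumR l (fun n => fst (g n)).
Proof. induction l; unfold sumR in *; simpl; auto. rewrite IHl. auto. Qed.
Lemma snd_fold g l : snd (fold_right Cplus (RtoC 0) (map g l)) = sumR l (fun n => snd (g n)).
Proof. induction l; unfold sumR in *; simpl; auto. rewrite IHl. auto. Qed.

Lemma fst_avgC Psi g N : Folner Psi -> fst (avgC Psi g N) = avgR Psi (fun n => fst (g n)) N.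
Proof.
  intros HF. pose proof (len_pos Psi N HF). unfold avgC. rewrite avgR_eq.
  rewrite <- fst_fold. destruct (fold_right Cplus (RtoC 0) (map g (Psi N))) as [a b].
  unfold Cdiv, Cinv, Cmult, RtoC. simpl. field. lra.
Qed.
Lemma snd_avgC Psi g N : Folner Psi -> snd (avgC Psi g N) = avgR Psi (fun n => snd (g n)) N.
Proof.
  intros HF. pose proof (len_pos Psi N HF). unfold avgC. rewrite avgR_eq.
  rewrite <- snd_fold. destruct (fold_right Cplus (RtoC 0) (map g (Psi N))) as [a b].
  unfold Cdiv, Cinv, Cmult, RtoC. simpl. field. lra.
Qed.

Lemma orth_dir U f Psi d h u : projection_family U -> Folner Psi -> L2 Psi f -> Stable U f Psi d -> 0 <= d ->
  U Psi h -> sqv Psi (fun n => Cminus (f n) (h n)) <= d^2 -> U Psi u ->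
  forall eps, 0 < eps -> exists M, forall N, (M <= N)%nat ->
    avgR Psi (fun n => fst (Cmult (u n) (Cconj (Cminus (f n) (h n))))) N < eps.
Proof.
  intros PF HF Hf HS Hd Hh Hv Hu eps Heps.
  apply NNPP. intro Hn.
  set (R0 := fun n => fst (Cmult (u n) (Cconj (Cminus (f n) (h n))))) in *.
  assert (HIO : forall M, exists N, (M <= N)%nat /\ eps <= avgR Psi R0 N).
  { intro M. apply NNPP. intro H2. apply Hn. exists M. intros N HN. apply Rnot_le_lt. intro H3. apply H2. exists N. auto. }
  destruct (IO_sub _ HIO) as [r [Hr Hr2]].
  set (v := fun n => Cminus (f n) (h n)) in *.
  assert (HLv : L2 Psi v) by (apply L2_minus; auto; eapply PF_L2; eauto).
  assert (HLu : L2 Psi u) by (eapply PF_L2; eauto).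
  destruct (L2_EvLe _ _ HLv) as [Ev _]. destruct (L2_EvLe _ _ HLu) as [Eu Hsu].
  set (su := sqv Psi u) in *.
  set (t := eps / (su + 1)).
  assert (Ht : 0 < t) by (unfold t; apply Rdiv_lt_0_compat; lra).
  assert (Ht2 : t * su < eps). { unfold t. apply Rmult_lt_reg_r with (su + 1). lra. field_simplify; lra. }
  set (g := fun n => Cplus (h n) (Cmult (RtoC t) (u n))).
  assert (Hg : U (subs Psi r) g). { apply PF_comp; auto. apply PF_add; auto. apply PF_scal; auto. }
  assert (Hpt : forall n, sq (fun n => Cminus (f n) (g n)) n = 1 * sq v n + (-2 * t) * R0 n + t^2 * sq u n).
  { intro n. unfold sq, g, v, R0. rewrite !Cmod2. destruct (f n) as [f1 f2], (h n) as [h1 h2], (u n) as [u1 u2].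
    simpl. ring. }
  assert (HE : EvLe (subs Psi r) (fun n => Cminus (f n) (g n)) (d^2 - 2 * t * eps + t^2 * su)).
  { intros e He. set (e' := e / (1 + t^2)).
    assert (He' : 0 < e') by (unfold e'; apply Rdiv_lt_0_compat; nra).
    destruct (Ev e' He') as [M1 HM1]. destruct (Eu e' He') as [M2 HM2].
    exists (Nat.max M1 M2). intros N HN.
    change (avgR (subs Psi r) ?G N) with (avgR Psi G (r N)).
    rewrite (avg_ext _ _ _ _ Hpt). rewrite avg_lin3.
    pose proof (sub_ge r Hr N).
    specialize (HM1 (r N) ltac:(lia)). specialize (HM2 (r N) ltac:(lia)). specialize (Hr2 N).
    assert (Hee : e' * (1 + t^2) = e) by (unfold e'; field; nra).
    nra. }
  apply EvLe_L2 in HE. destruct HE as [HL Hle].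
  pose proof (proj2 (L2_EvLe _ _ HL)) as Hpos.
  specialize (HS r Hr g Hg). rewrite normPhi_sqv in HS.
  apply sqrt_ge_sq in HS; auto. nra.
Qed.

Lemma avg_scale Psi c g N : avgR Psi (fun n => c * g n) N = c * avgR Psi g N.
Proof. rewrite !avgR_eq. rewrite (sumR_ext _ _ (fun n => c * g n + 0 * g n)) by (intros; ring).
  rewrite sumR_lin. unfold Rdiv. ring. Qed.

Lemma orth U f Psi d h : projection_family U -> Folner Psi -> L2 Psi f -> Stable U f Psi d -> 0 <= d ->
  U Psi h -> sqv Psi (fun n => Cminus (f n) (h n)) <= d^2 ->
  forall u, U Psi u -> is_inner Psi u (fun n => Cminus (f n) (h n)) (RtoC 0).
Proof.
  intros PF HF Hf HS Hd Hh Hv u Hu.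
  set (v := fun n => Cminus (f n) (h n)).
  assert (D : forall c, U Psi (fun n => Cmult c (u n))) by (intro c; apply PF_scal; auto).
  pose proof (orth_dir U f Psi d h u PF HF Hf HS Hd Hh Hv Hu) as E1.
  pose proof (orth_dir U f Psi d h _ PF HF Hf HS Hd Hh Hv (D (RtoC (-1)))) as E2.
  pose proof (orth_dir U f Psi d h _ PF HF Hf HS Hd Hh Hv (D (0, 1))) as E3.
  pose proof (orth_dir U f Psi d h _ PF HF Hf HS Hd Hh Hv (D (0, -1))) as E4.
  unfold is_inner. apply filterlim_locally. intros eps.
  destruct (E1 eps (cond_pos eps)) as [M1 H1].
  destruct (E2 eps (cond_pos eps)) as [M2 H2].
  destruct (E3 eps (cond_pos eps)) as [M3 H3].
  destruct (E4 eps (cond_pos eps)) as [M4 H4].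
  exists (Nat.max (Nat.max M1 M2) (Nat.max M3 M4)). intros N HN.
  specialize (H1 N ltac:(lia)). specialize (H2 N ltac:(lia)). specialize (H3 N ltac:(lia)). specialize (H4 N ltac:(lia)).
  set (z := avgC Psi (fun n => Cmult (u n) (Cconj (v n))) N).
  assert (Hz1 : fst z = avgR Psi (fun n => fst (Cmult (u n) (Cconj (Cminus (f n) (h n))))) N) by (apply fst_avgC; auto).
  assert (Hz2 : snd z = avgR Psi (fun n => snd (Cmult (u n) (Cconj (Cminus (f n) (h n))))) N) by (apply snd_avgC; auto).
  assert (A2 : avgR Psi (fun n => fst (Cmult (Cmult (RtoC (-1)) (u n)) (Cconj (Cminus (f n) (h n))))) N = - fst z).
  { rewrite Hz1. transitivity (avgR Psi (fun n => -1 * fst (Cmult (u n) (Cconj (Cminus (f n) (h n))))) N).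
    apply avg_ext. intro n. destruct (u n), (f n), (h n). simpl. ring. rewrite avg_scale. ring. }
  assert (A3 : avgR Psi (fun n => fst (Cmult (Cmult (0, 1) (u n)) (Cconj (Cminus (f n) (h n))))) N = - snd z).
  { rewrite Hz2. transitivity (avgR Psi (fun n => -1 * snd (Cmult (u n) (Cconj (Cminus (f n) (h n))))) N).
    apply avg_ext. intro n. destruct (u n), (f n), (h n). simpl. ring. rewrite avg_scale. ring. }
  assert (A4 : avgR Psi (fun n => fst (Cmult (Cmult (0, -1) (u n)) (Cconj (Cminus (f n) (h n))))) N = snd z).
  { rewrite Hz2. transitivity (avgR Psi (fun n => 1 * snd (Cmult (u n) (Cconj (Cminus (f n) (h n))))) N).
    apply avg_ext. intro n. destruct (u n), (f n), (h n). simpl. ring. rewrite avg_scale. ring. }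
  rewrite A2 in H2. rewrite A3 in H3. rewrite A4 in H4. rewrite <- Hz1 in H1.
  change (avgC Psi (fun n => Cmult (u n) (Cconj (Cminus (f n) (h n)))) N) with z.
  destruct z as [a b]. simpl in *. split.
  - change (Rabs (a - 0) < eps). rewrite Rminus_0_r. apply Rabs_def1; lra.
  - change (Rabs (b - 0) < eps). rewrite Rminus_0_r. apply Rabs_def1; lra.
Qed.


Fixpoint phis (ps : (nat -> nat) -> nat -> nat -> nat) (k : nat) : nat -> nat :=
  match k with 0 => fun n => n | S k' => fun n => phis ps k' (ps (phis ps k') k' n) end.

Fixpoint Tc (ps : (nat -> nat) -> nat -> nat -> nat) (k j : nat) : nat -> nat :=
  match j with 0 => fun n => n | S j' => fun n => Tc ps k j' (ps (phis ps (k + j')%nat) (k + j')%nat n) end.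

Lemma phis_T ps k j n : phis ps (k + j)%nat n = phis ps k (Tc ps k j n).
Proof.
  revert n. induction j; intro n. rewrite Nat.add_0_r. reflexivity.
  rewrite Nat.add_succ_r. simpl. rewrite IHj. reflexivity.
Qed.

Lemma phis_sub ps : (forall p k, sub (ps p k)) -> forall k, sub (phis ps k).
Proof. intros H k. induction k. apply sub_id. simpl. apply sub_comp; auto. Qed.

Lemma Tc_sub ps : (forall p k, sub (ps p k)) -> forall k j, sub (Tc ps k j).
Proof. intros H k j. induction j. apply sub_id. simpl. apply sub_comp; auto. Qed.

Definition th ps k := fun N => Tc ps k (N - k)%nat N.

Lemma th_sub ps : (forall p k, sub (ps p k)) -> forall k, sub (th ps k).
Proof.
  intros H k N. unfold th. destruct (Nat.lt_ge_cases N k).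
  - replace (N - k)%nat with 0%nat by lia. replace (S N - k)%nat with 0%nat by lia. simpl. lia.
  - replace (S N - k)%nat with (S (N - k)) by lia. simpl.
    apply sub_lt. apply Tc_sub; auto.
    pose proof (sub_ge _ (H (phis ps (k + (N - k))) (k + (N - k))%nat) (S N)). lia.
Qed.

Lemma th_eq ps k N : (k <= N)%nat -> phis ps N N = phis ps k (th ps k N).
Proof. intros H. unfold th. rewrite <- phis_T. f_equal. lia. Qed.

Lemma phistar_sub ps : (forall p k, sub (ps p k)) -> sub (fun n => phis ps n n).
Proof.
  intros H n. simpl. apply sub_lt. apply phis_sub; auto.
  pose proof (sub_ge _ (H (phis ps n) n) (S n)). lia.
Qed.

Definition Approx U (f : nat -> C) Psi d := forall eps, 0 < eps -> exists g, U Psi g /\ normPhi Psi (fun n => Cminus (f n) (g n)) < d + eps.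

Lemma L2f Phi f s : L2 Phi f -> sub s -> L2 (subs Phi s) f.
Proof. intros. apply L2_comp; auto. Qed.

Lemma stepA U Phi f : projection_family U -> Folner Phi -> L2 Phi f ->
  exists phi, sub phi /\ exists d, 0 <= d /\ Stable U f (subs Phi phi) d /\ Approx U f (subs Phi phi) d.
Proof.
  intros PF HF Hf.
  assert (CH : forall (p : nat -> nat) (k : nat), exists q : (nat -> nat) * (nat -> C), sub (fst q) /\
     (sub p -> U (subs (subs Phi p) (fst q)) (snd q) /\
       forall r g, sub r -> U (subs (subs Phi p) r) g ->
        normPhi (subs (subs Phi p) (fst q)) (fun n => Cminus (f n) (snd q n)) <=
        normPhi (subs (subs Phi p) r) (fun n => Cminus (f n) (g n)) + / (INR k + 1))).
  { intros p k. destruct (classic (sub p)) as [Hp|Hp].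
    2:{ exists ((fun n => n), (fun _ => RtoC 0)). split. apply sub_id. tauto. }
    assert (HFp : Folner (subs Phi p)) by (apply Folner_sub; auto).
    destruct (inf_exists (fun x => exists r g, sub r /\ U (subs (subs Phi p) r) g /\
        x = normPhi (subs (subs Phi p) r) (fun n => Cminus (f n) (g n)))) as [m [Hm0 [Hm1 Hm2]]].
    { exists (normPhi (subs (subs Phi p) (fun n => n)) (fun n => Cminus (f n) (RtoC 0))).
      exists (fun n => n), (fun _ => RtoC 0). split. apply sub_id. split; auto.
      apply PF_const; auto; apply Folner_sub; auto; apply sub_id. }
    { intros x [r [g [_ [_ ->]]]]. apply sqrt_pos. }
    assert (He : 0 < / (INR k + 1)). { apply Rinv_0_lt_compat. pose proof (pos_INR k). lra. }
    destruct (Hm2 _ He) as [x [[r [g [Hr [Hg ->]]]] Hx]].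
    exists (r, g). simpl. split; auto. intros _. split; auto.
    intros r' g' Hr' Hg'. assert (m <= normPhi (subs (subs Phi p) r') (fun n => Cminus (f n) (g' n))).
    { apply Hm1. exists r', g'. auto. } lra. }
  set (ch := fun p k => proj1_sig (constructive_indefinite_description _ (CH p k))).
  assert (Hch : forall p k, sub (fst (ch p k)) /\ (sub p -> U (subs (subs Phi p) (fst (ch p k))) (snd (ch p k)) /\
       forall r g, sub r -> U (subs (subs Phi p) r) g ->
        normPhi (subs (subs Phi p) (fst (ch p k))) (fun n => Cminus (f n) (snd (ch p k) n)) <=
        normPhi (subs (subs Phi p) r) (fun n => Cminus (f n) (g n)) + / (INR k + 1))).
  { intros p k. exact (proj2_sig (constructive_indefinite_description _ (CH p k))). }
  clearbody ch.
  set (ps := fun p k => fst (ch p k)).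
  assert (Hps : forall p k, sub (ps p k)) by (intros; apply Hch).
  set (phi := fun n => phis ps n n).
  assert (Hphi : sub phi) by (apply phistar_sub; auto).
  set (Ps := subs Phi phi).
  assert (HFs : Folner Ps) by (apply Folner_sub; auto).
  destruct (inf_exists (fun x => exists r g, sub r /\ U (subs Ps r) g /\
        x = normPhi (subs Ps r) (fun n => Cminus (f n) (g n)))) as [m [Hm0 [Hm1 Hm2]]].
  { exists (normPhi (subs Ps (fun n => n)) (fun n => Cminus (f n) (RtoC 0))).
    exists (fun n => n), (fun _ => RtoC 0). split. apply sub_id. split; auto.
    apply PF_const; auto; apply Folner_sub; auto; apply sub_id. }
  { intros x [r [g [_ [_ ->]]]]. apply sqrt_pos. }
  exists phi. split; auto. exists m. split; auto. split.
  { intros r Hr g Hg. apply Hm1. exists r, g. auto. }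
  assert (Claim : forall k, U Ps (snd (ch (phis ps k) k)) /\
    forall r g, sub r -> U (subs Ps r) g ->
      normPhi Ps (fun n => Cminus (f n) (snd (ch (phis ps k) k) n)) <=
      normPhi (subs Ps r) (fun n => Cminus (f n) (g n)) + / (INR k + 1)).
  { intro k. set (pk := phis ps k). assert (Hpk : sub pk) by (apply phis_sub; auto).
    destruct (Hch pk k) as [Hq [Hgk Hmin]]; auto.
    set (q := fst (ch pk k)) in *. set (gk := snd (ch pk k)) in *.
    assert (HF1 : Folner (subs (subs Phi pk) q)) by (apply Folner_sub; auto; apply Folner_sub; auto).
    assert (Heq1 : forall N, (S k <= N)%nat -> Ps N = subs (subs Phi pk) q (th ps (S k) N)).
    { intros N HN. unfold Ps, subs, phi. rewrite (th_eq ps (S k) N HN). reflexivity. }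
    assert (Hthk : sub (th ps (S k))) by (apply th_sub; auto).
    assert (HL1 : L2 (subs (subs Phi pk) q) (fun n => Cminus (f n) (gk n))).
    { apply L2_minus. apply L2f. apply L2f; auto. auto. eapply PF_L2; eauto. }
    split.
    { apply (PF_sub U (subs (subs Phi pk) q) Ps (th ps (S k)) (S k)); auto. }
    intros r g Hr Hg.
    assert (HFr : Folner (subs Ps r)) by (apply Folner_sub; auto).
    set (r' := fun N => th ps k (r N)).
    assert (Hr' : sub r') by exact (sub_comp _ _ (th_sub ps Hps k) Hr).
    assert (HF2 : Folner (subs (subs Phi pk) r')) by (apply Folner_sub; auto; apply Folner_sub; auto).
    assert (Heq2 : forall N, (k <= N)%nat -> subs (subs Phi pk) r' N = subs Ps r N).
    { intros N HN. unfold Ps, subs, phi, r'. rewrite (th_eq ps k (r N)). reflexivity.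
      pose proof (sub_ge r Hr N). lia. }
    assert (Hg' : U (subs (subs Phi pk) r') g).
    { apply (PF_sub U (subs Ps r) _ (fun n => n) k); auto. exact sub_id. }
    specialize (Hmin r' g Hr' Hg').
    assert (HL2 : L2 (subs Ps r) (fun n => Cminus (f n) (g n))).
    { apply L2_minus. apply L2f. apply L2f; auto. auto. eapply PF_L2; eauto. }
    assert (I1 : normPhi Ps (fun n => Cminus (f n) (gk n)) <= normPhi (subs (subs Phi pk) q) (fun n => Cminus (f n) (gk n))).
    { rewrite !normPhi_sqv. apply sqrt_le_1_alt. apply (L2_sub _ Ps _ (th ps (S k)) (S k)); auto. }
    assert (I2 : normPhi (subs (subs Phi pk) r') (fun n => Cminus (f n) (g n)) <= normPhi (subs Ps r) (fun n => Cminus (f n) (g n))).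
    { rewrite !normPhi_sqv. apply sqrt_le_1_alt. apply (L2_sub (subs Ps r) _ _ (fun n => n) k); auto. exact sub_id. }
    lra. }
  intros eps Heps.
  destruct (e_small 1 (eps / 2)) as [K HK]. lra.
  specialize (HK K (Nat.le_refl _)). rewrite Rmult_1_l in HK.
  destruct (Hm2 (eps / 2)) as [x [[r [g [Hr [Hg ->]]]] Hx]]. lra.
  destruct (Claim K) as [HgK HK2]. exists (snd (ch (phis ps K) K)). split; auto.
  specialize (HK2 r g Hr Hg). change (subs Phi phi) with Ps. lra.
Qed.


Fixpoint st (Psi : seq_sets) (CN : nat -> nat -> list nat -> nat) (k : nat) : nat * list nat :=
  match k with
  | 0 => (CN 0%nat 0%nat nil, nil)
  | S k' => let p := st Psi CN k' in
            (CN (S k') (S (fst p)) (snd p ++ Psi (fst p)), snd p ++ Psi (fst p))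
  end.

Definition ee (k : nat) : R := / (INR k + 1).

Lemma ee_bounds k : 0 < ee k <= 1.
Proof. unfold ee. pose proof (pos_INR k). split. apply Rinv_0_lt_compat; lra.
  rewrite <- Rinv_1. apply Rinv_le_contravar; lra. Qed.

Lemma ee_mono j k : (j <= k)%nat -> ee k <= ee j.
Proof. intros H. unfold ee. apply le_INR in H. pose proof (pos_INR j). apply Rinv_le_contravar; lra. Qed.

Lemma avg_plus Psi g h N : avgR Psi (fun n => g n + h n) N = avgR Psi g N + avgR Psi h N.
Proof. rewrite !avgR_eq, sumR_plus. unfold Rdiv. ring. Qed.

Lemma avg_ind_bound Psi N O X e : Folner Psi -> (forall n, 0 <= X n) ->
  sumR O X <= e * INR (length (Psi N)) -> avgR Psi (fun n => if memb n O then X n else 0) N <= e.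
Proof.
  intros HF HX HS. pose proof (len_pos Psi N HF) as Hl.
  rewrite avgR_eq. pose proof (sumR_ind (Psi N) O X (proj1 (proj1 HF N)) HX).
  apply Rmult_le_reg_r with (INR (length (Psi N))); auto. unfold Rdiv. rewrite Rmult_assoc, Rinv_l by lra. lra.
Qed.




Lemma O_incl (Sk : nat -> list nat) (O : nat -> list nat) : (forall k, O (S k) = O k ++ Sk k) ->
  forall k i n, (i < k)%nat -> In n (Sk i) -> In n (O k).
Proof.
  intros HO k. induction k; intros i n Hi Hn. lia.
  rewrite HO. apply in_or_app. destruct (Nat.eq_dec i k). subst; auto. left; apply (IHk i); auto; lia.
Qed.

Lemma O_least (Sk : nat -> list nat) (O : nat -> list nat) : O 0%nat = nil -> (forall k, O (S k) = O k ++ Sk k) ->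
  forall k n, In n (O k) -> exists i, (i < k)%nat /\ In n (Sk i) /\ ~ In n (O i).
Proof.
  intros H0 HO k. induction k; intros n Hn. rewrite H0 in Hn. destruct Hn.
  rewrite HO in Hn. destruct (classic (In n (O k))) as [H|H].
  - destruct (IHk n H) as [i [? ?]]. exists i. split; auto; lia.
  - apply in_app_or in Hn. destruct Hn as [Hn|Hn]. contradiction. exists k. split; auto.
Qed.

Lemma O_uniq (Sk : nat -> list nat) (O : nat -> list nat) : (forall k, O (S k) = O k ++ Sk k) ->
  forall i k n, In n (Sk i) -> ~ In n (O i) -> In n (Sk k) -> ~ In n (O k) -> i = k.
Proof.
  intros HO i k n H1 H2 H3 H4. destruct (Nat.lt_total i k) as [H|[H|H]]; auto.
  - exfalso. apply H4. apply (O_incl Sk O HO k i); auto.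
  - exfalso. apply H2. apply (O_incl Sk O HO i k); auto.
Qed.

Lemma stepB U f Psi d : projection_family U -> Folner Psi -> L2 Psi f -> Stable U f Psi d -> 0 <= d ->
  Approx U f Psi d ->
  exists s, sub s /\ exists h, U (subs Psi s) h /\ sqv (subs Psi s) (fun n => Cminus (f n) (h n)) <= d^2.
Proof.
  intros PF HF Hf HS Hd HA.
  assert (G : forall k, exists gg, U Psi gg /\ normPhi Psi (fun n => Cminus (f n) (gg n)) < d + ee k).
  { intro k. apply HA. apply ee_bounds. }
  set (g := fun k => proj1_sig (constructive_indefinite_description _ (G k))).
  assert (Hg : forall k, U Psi (g k) /\ normPhi Psi (fun n => Cminus (f n) (g k n)) < d + ee k).
  { intro k. exact (proj2_sig (constructive_indefinite_description _ (G k))). }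
  clearbody g.
  set (a := fun k => (d + ee k)^2).
  set (c := fun j => 4 * ((d + ee j)^2 - d^2)).
  assert (Ea : forall k, EvLe Psi (fun n => Cminus (f n) (g k n)) (a k)).
  { intro k. destruct (Hg k) as [Hgk Hn].
    assert (HL : L2 Psi (fun n => Cminus (f n) (g k n))) by (apply L2_minus; auto; eapply PF_L2; eauto).
    destruct (L2_EvLe _ _ HL) as [E Hp]. rewrite normPhi_sqv in Hn.
    assert (H0 : 0 <= d + ee k) by (pose proof (ee_bounds k); lra).
    pose proof (sqrt_lt_sq_inv _ _ Hp H0 Hn).
    apply (EvLe_mono _ _ _ _ (Rlt_le _ _ H)) in E. exact E. }
  assert (Cau : forall j k, (j <= k)%nat -> EvLe Psi (fun n => Cminus (g k n) (g j n)) (c j)).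
  { intros j k Hjk eps Heps.
    set (m := fun n => Cmult (RtoC (/2)) (Cplus (g k n) (g j n))).
    assert (Hm : U Psi m). { apply PF_scal; auto. apply PF_add; auto; apply Hg. }
    set (e' := eps / 8).
    assert (He' : 0 < e') by (unfold e'; lra).
    destruct (Ea k e' He') as [M1 H1]. destruct (Ea j e' He') as [M2 H2].
    destruct (LB U f Psi d m PF HF Hf HS Hd Hm e' He') as [M3 H3].
    exists (Nat.max M1 (Nat.max M2 M3)). intros N HN.
    specialize (H1 N ltac:(lia)). specialize (H2 N ltac:(lia)). specialize (H3 N ltac:(lia)).
    rewrite (avg_ext _ _ (fun n => 2 * sq (fun n => Cminus (f n) (g k n)) n + 2 * sq (fun n => Cminus (f n) (g j n)) n
                                  + (-4) * sq (fun n => Cminus (f n) (m n)) n)).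
    2:{ intro n. unfold sq, m. rewrite !Cmod2. destruct (f n) as [f1 f2], (g k n) as [x1 x2], (g j n) as [y1 y2].
        unfold RtoC. simpl. field. }
    rewrite avg_lin3.
    assert (a k <= a j). { unfold a. pose proof (ee_mono j k Hjk). pose proof (ee_bounds k). nra. }
    unfold c. unfold a, e' in *. lra. }
  assert (HlenF := Folner_len Psi HF).
  set (B := fun k n => sumR (seq 0 k) (fun i => sq (fun n => Cminus (f n) (g i n)) n +
                        sumR (seq 0 k) (fun j => sq (fun n => Cminus (g i n) (g j n)) n))).
  assert (HB : forall k n, 0 <= B k n).
  { intros k n. apply sumR_nonneg. intro i. pose proof (sq_nonneg (fun n => Cminus (f n) (g i n)) n).
    pose proof (sumR_nonneg (seq 0 k) (fun j => sq (fun n => Cminus (g i n) (g j n)) n) (fun j => sq_nonneg _ n)). lra. }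
  set (Cond := fun k lo O N => (lo <= N)%nat /\ avgR Psi (sq (fun n => Cminus (f n) (g k n))) N <= a k + ee k /\
     (forall j, (j < k)%nat -> avgR Psi (sq (fun n => Cminus (g k n) (g j n))) N <= c j + ee k) /\
     sumR O (B k) <= ee k * INR (length (Psi N))).
  assert (ExN : forall k lo O, exists N, Cond k lo O N).
  { intros k lo O. destruct (ee_bounds k) as [He1 He2].
    destruct (Ea k _ He1) as [M1 H1].
    destruct (ev_forall_lt (fun j N => avgR Psi (sq (fun n => Cminus (g k n) (g j n))) N <= c j + ee k) k) as [M2 H2].
    { intros j Hj. apply (Cau j k ltac:(lia)). auto. }
    destruct (HlenF (sumR O (B k) / ee k)) as [M3 H3].
    exists (Nat.max lo (Nat.max M1 (Nat.max M2 M3))). split; [lia|split; [|split]].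
    - apply H1; lia.
    - intros j Hj. apply H2; auto; lia.
    - specialize (H3 (Nat.max lo (Nat.max M1 (Nat.max M2 M3))) ltac:(lia)).
      apply Rmult_le_compat_l with (r := ee k) in H3; [|lra]. unfold Rdiv in H3.
      rewrite <- Rmult_assoc, (Rmult_comm (ee k)), Rmult_assoc, Rinv_r in H3 by lra. lra. }
  set (CN := fun k lo O => proj1_sig (constructive_indefinite_description _ (ExN k lo O))).
  assert (HCN : forall k lo O, Cond k lo O (CN k lo O)).
  { intros. exact (proj2_sig (constructive_indefinite_description _ (ExN k lo O))). }
  clearbody CN.
  set (Nn := fun k => fst (st Psi CN k)).
  set (O := fun k => snd (st Psi CN k)).
  set (Sk := fun k => Psi (Nn k)).
  assert (HO0 : O 0%nat = nil) by reflexivity.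
  assert (HOS : forall k, O (S k) = O k ++ Sk k) by (intro; reflexivity).
  assert (HCond : forall k, exists lo, Cond k lo (O k) (Nn k)).
  { intro k. destruct k. exists 0%nat. apply HCN. exists (S (Nn k)). apply HCN. }
  assert (Hsub : sub Nn).
  { intro k. destruct (HCN (S k) (S (Nn k)) (O (S k))) as [H _]. exact H. }
  set (ka := fun n => match excluded_middle_informative (exists k, In n (Sk k) /\ ~ In n (O k)) with
                      | left H => proj1_sig (constructive_indefinite_description _ H) | right _ => 0%nat end).
  assert (Hka : forall k n, In n (Sk k) -> ~ In n (O k) -> ka n = k).
  { intros k n H1 H2. unfold ka. destruct (excluded_middle_informative _) as [H|H].
    - destruct (constructive_indefinite_description _ H) as [i [Hi1 Hi2]]. simpl.
      apply (O_uniq Sk O HOS i k n); auto.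
    - exfalso. apply H. exists k. auto. }
  clearbody ka.
  set (h := fun n => g (ka n) n).
  assert (PB : forall k n, In n (Sk k) ->
    sq (fun n => Cminus (f n) (h n)) n <= sq (fun n => Cminus (f n) (g k n)) n + (if memb n (O k) then B k n else 0) /\
    forall j, (j < k)%nat -> sq (fun n => Cminus (h n) (g j n)) n <= sq (fun n => Cminus (g k n) (g j n)) n + (if memb n (O k) then B k n else 0)).
  { intros k n Hn. destruct (memb n (O k)) eqn:E.
    - apply memb_In in E. destruct (O_least Sk O HO0 HOS k n E) as [i [Hik [Hi1 Hi2]]].
      pose proof (Hka i n Hi1 Hi2) as Hki.
      assert (Bi : sq (fun n => Cminus (f n) (g i n)) n + sumR (seq 0 k) (fun j => sq (fun n => Cminus (g i n) (g j n)) n) <= B k n).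
      { apply (sumR_seq_member k (fun i => sq (fun n => Cminus (f n) (g i n)) n +
                        sumR (seq 0 k) (fun j => sq (fun n => Cminus (g i n) (g j n)) n))); auto.
        intro i'. pose proof (sq_nonneg (fun n => Cminus (f n) (g i' n)) n).
        pose proof (sumR_nonneg (seq 0 k) (fun j => sq (fun n => Cminus (g i' n) (g j n)) n) (fun j => sq_nonneg _ n)). lra. }
      pose proof (sumR_nonneg (seq 0 k) (fun j => sq (fun n => Cminus (g i n) (g j n)) n) (fun j => sq_nonneg _ n)).
      split.
      + change (sq (fun n => Cminus (f n) (h n)) n) with (Cmod (Cminus (f n) (g (ka n) n)) ^ 2). rewrite Hki.
        change (Cmod (Cminus (f n) (g i n)) ^ 2) with (sq (fun n => Cminus (f n) (g i n)) n). pose proof (sq_nonneg (fun n => Cminus (f n) (g k n)) n). lra.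
      + intros j Hj.
        change (sq (fun n => Cminus (h n) (g j n)) n) with (Cmod (Cminus (g (ka n) n) (g j n)) ^ 2). rewrite Hki.
        change (Cmod (Cminus (g i n) (g j n)) ^ 2) with (sq (fun n => Cminus (g i n) (g j n)) n).
        pose proof (sumR_seq_member k (fun j => sq (fun n => Cminus (g i n) (g j n)) n) j (fun j => sq_nonneg _ n) Hj).
        pose proof (sq_nonneg (fun n => Cminus (g k n) (g j n)) n). cbv beta in *. pose proof (sq_nonneg (fun n => Cminus (f n) (g i n)) n). lra.
    - assert (~ In n (O k)) by (intro H; apply memb_In in H; congruence).
      pose proof (Hka k n Hn H) as Hkk. split.
      + change (sq (fun n => Cminus (f n) (h n)) n) with (Cmod (Cminus (f n) (g (ka n) n)) ^ 2). rewrite Hkk.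
        unfold sq. lra.
      + intros j Hj. change (sq (fun n => Cminus (h n) (g j n)) n) with (Cmod (Cminus (g (ka n) n) (g j n)) ^ 2). rewrite Hkk.
        unfold sq. lra. }
  set (Ps := subs Psi Nn).
  assert (HFs : Folner Ps) by (apply Folner_sub; auto).
  assert (R1 : forall k, avgR Ps (sq (fun n => Cminus (f n) (h n))) k <= a k + ee k + ee k).
  { intro k. destruct (HCond k) as [lo [_ [C1 [_ C3]]]].
    change (avgR Ps ?G k) with (avgR Psi G (Nn k)).
    eapply Rle_trans. apply (avg_le Psi _ (fun n => sq (fun n => Cminus (f n) (g k n)) n + (if memb n (O k) then B k n else 0))).
    intros n Hn. apply (PB k n Hn).
    rewrite avg_plus. pose proof (avg_ind_bound Psi (Nn k) (O k) (B k) (ee k) HF (HB k) C3). lra. }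
  assert (R2 : forall j k, (j < k)%nat -> avgR Ps (sq (fun n => Cminus (h n) (g j n))) k <= c j + ee k + ee k).
  { intros j k Hjk. destruct (HCond k) as [lo [_ [_ [C2 C3]]]].
    change (avgR Ps ?G k) with (avgR Psi G (Nn k)).
    eapply Rle_trans. apply (avg_le Psi _ (fun n => sq (fun n => Cminus (g k n) (g j n)) n + (if memb n (O k) then B k n else 0))).
    intros n Hn. apply (PB k n Hn); auto.
    rewrite avg_plus. pose proof (avg_ind_bound Psi (Nn k) (O k) (B k) (ee k) HF (HB k) C3).
    specialize (C2 j Hjk). lra. }
  assert (E1 : EvLe Ps (fun n => Cminus (f n) (h n)) (d^2)).
  { intros eps Heps. destruct (e_small (2*d+3) eps Heps) as [M HM]. exists M. intros k Hk.
    specialize (HM k Hk). change (/ (INR k + 1)) with (ee k) in HM. specialize (R1 k).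
    pose proof (ee_bounds k). unfold a in R1. nra. }
  assert (E2 : forall j, EvLe Ps (fun n => Cminus (h n) (g j n)) (c j)).
  { intros j eps Heps. destruct (e_small 2 eps Heps) as [M HM]. exists (Nat.max M (S j)). intros k Hk.
    specialize (HM k ltac:(lia)). change (/ (INR k + 1)) with (ee k) in HM. specialize (R2 j k ltac:(lia)). lra. }
  destruct (EvLe_L2 _ _ _ E1) as [HL1 HL2].
  assert (Hfs : L2 Ps f) by (apply L2f; auto).
  assert (HLh : L2 Ps h).
  { apply (L2_comb Ps h f (fun n => Cminus (f n) (h n)) 2 2); auto; try lra.
    intro n. unfold sq. rewrite !Cmod2. destruct (f n) as [f1 f2], (h n) as [h1 h2]. simpl.
    pose proof (pow2_ge_0 (2*f1 - h1)). pose proof (pow2_ge_0 (2*f2 - h2)). nra. }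
  assert (Hh : U Ps h).
  { apply PF_closed; auto. intros eps Heps.
    assert (He2 : 0 < eps^2 / 2) by nra.
    destruct (e_small (4 * (2 * d + 1)) _ He2) as [j Hj]. specialize (Hj j (Nat.le_refl _)).
    change (/ (INR j + 1)) with (ee j) in Hj.
    exists (g j). split. apply PF_comp; auto; apply Hg.
    destruct (EvLe_L2 _ _ _ (E2 j)) as [_ Hc]. rewrite normPhi_sqv. apply sqrt_lt_sq; auto.
    pose proof (ee_bounds j). unfold c in Hc. nra. }
  exists Nn. split; auto. exists h. split; auto.
Qed.


Lemma Rmin_neg a b : Rmin a b = - Rmax (- a) (- b).
Proof. unfold Rmin, Rmax. repeat destruct Rle_dec; lra. Qed.

Lemma clip U f Psi h d : projection_family U -> Folner Psi -> U Psi h -> L2 Psi f ->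
  sqv Psi (fun n => Cminus (f n) (h n)) <= d^2 ->
  exists h', U Psi h' /\ sqv Psi (fun n => Cminus (f n) (h' n)) <= d^2 /\
    forall a b, (forall n, Im (f n) = 0 /\ a <= Re (f n) <= b) -> forall n, Im (h' n) = 0 /\ a <= Re (h' n) <= b.
Proof.
  intros PF HF Hh Hf Hv.
  destruct (classic (exists a b, forall n, Im (f n) = 0 /\ a <= Re (f n) <= b)) as [[a0 [b0 HP]]|HnP].
  2:{ exists h. split; auto. split; auto. intros a b H. exfalso. apply HnP. exists a, b. auto. }
  destruct (completeness (fun x => exists n, x = Re (f n))) as [hi [Hhi1 Hhi2]].
  { exists b0. intros x [n ->]. apply HP. }
  { exists (Re (f 0%nat)). exists 0%nat. auto. }
  destruct (completeness (fun x => exists n, x = - Re (f n))) as [slo [Hlo1 Hlo2]].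
  { exists (- a0). intros x [n ->]. specialize (HP n). lra. }
  { exists (- Re (f 0%nat)). exists 0%nat. auto. }
  set (lo := - slo).
  assert (Hle : forall n, lo <= Re (f n) <= hi).
  { intro n. split. assert (- Re (f n) <= slo) by (apply Hlo1; exists n; auto). unfold lo; lra.
    apply Hhi1. exists n. auto. }
  assert (Hlohi : lo <= hi) by (specialize (Hle 0%nat); lra).
  set (r := fun n => RtoC (Re (h n))).
  assert (Hr : U Psi r).
  { replace r with (fun n => Cmult (RtoC (/2)) (Cplus (h n) (Cconj (h n)))).
    apply PF_scal; auto. apply PF_add; auto. apply PF_conj; auto.
    apply functional_extensionality. intro n. unfold r. destruct (h n) as [x y].
    unfold RtoC, Cmult, Cplus, Cconj, Re. simpl. f_equal; field. }
  set (c1 := fun _ : nat => RtoC (- hi)).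
  set (u2 := fun n => Cmult (RtoC (-1)) (r n)).
  assert (Hm1 : U Psi (fun n => RtoC (Rmax (Re (c1 n)) (Re (u2 n))))).
  { apply PF_max; [exact PF | exact HF | unfold c1; apply PF_const; auto | unfold u2; apply PF_scal; auto
     | intro n; reflexivity | intro n; unfold u2, r, RtoC, Cmult, Im; simpl; ring]. }
  set (mn := fun n => RtoC (Rmin hi (Re (h n)))).
  assert (Hmn : U Psi mn).
  { replace mn with (fun n => Cmult (RtoC (-1)) (RtoC (Rmax (Re (c1 n)) (Re (u2 n))))).
    apply PF_scal; auto.
    apply functional_extensionality. intro n. unfold mn, c1, u2, r. rewrite Rmin_neg.
    unfold RtoC, Cmult, Re. simpl. replace (-1 * fst (h n) - 0 * 0) with (- fst (h n)) by ring. f_equal; ring. }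
  set (h' := fun n => RtoC (Rmax lo (Rmin hi (Re (h n))))).
  assert (Hh' : U Psi h').
  { exact (PF_max U Psi (fun _ => RtoC lo) mn PF HF (PF_const U Psi _ PF HF) Hmn (fun n => eq_refl) (fun n => eq_refl)). }
  exists h'. split; auto. split.
  - assert (HLfh : L2 Psi (fun n => Cminus (f n) (h n))) by (apply L2_minus; auto; eapply PF_L2; eauto).
    destruct (L2_comb Psi (fun n => Cminus (f n) (h' n)) _ _ 1 0 HLfh HLfh ltac:(lra) ltac:(lra)) as [_ Hc].
    + intro n. unfold sq, h'. rewrite !Cmod2. pose proof (Hle n) as Hn. destruct (HP n) as [Him _].
      unfold Re, Im in *. destruct (f n) as [x y], (h n) as [p q]. simpl in *. subst y.
      unfold Rmax, Rmin. repeat destruct Rle_dec; nra.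
    + lra.
  - intros a b Hab n. specialize (Hab 0%nat) as Hab0. split. reflexivity.
    assert (a <= lo).
    { unfold lo. assert (slo <= - a); [|lra]. apply Hlo2. intros x [m ->]. specialize (Hab m). lra. }
    assert (hi <= b). { apply Hhi2. intros x [m ->]. apply Hab. }
    unfold h', Re, RtoC. simpl. unfold Rmax, Rmin. repeat destruct Rle_dec; lra.
Qed.

Theorem theorem3p9 (U : seq_sets -> (nat -> C) -> Prop) (Phi : seq_sets) (f : nat -> C) :
  projection_family U -> Folner Phi -> L2 Phi f ->
  exists (phi : nat -> nat) (fU : nat -> C),
    (forall k, (phi k < phi (S k))%nat) /\
    let Psi := fun N => Phi (phi N) in
    U Psi fU /\
    in_perp U Psi (fun n => Cminus (f n) (fU n)) /\
    is_glb_Rbar (fun x => exists g, U Psi g /\ x = normPhi Psi (fun n => Cminus (f n) (g n)))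
                (normPhi Psi (fun n => Cminus (f n) (fU n))) /\
    (forall a b : R,
       (forall n, Im (f n) = 0 /\ a <= Re (f n) <= b) ->
       (forall n, Im (fU n) = 0 /\ a <= Re (fU n) <= b)).
Proof.
  intros PF HF Hf.
  destruct (stepA U Phi f PF HF Hf) as [phi [Hphi [d [Hd [HS HA]]]]].
  assert (HFs : Folner (subs Phi phi)) by (apply Folner_sub; auto).
  assert (Hfs : L2 (subs Phi phi) f) by (apply L2f; auto).
  destruct (stepB U f (subs Phi phi) d PF HFs Hfs HS Hd HA) as [s [Hs [h [Hh Hv]]]].
  set (Psi := subs (subs Phi phi) s).
  assert (HFP : Folner Psi) by (apply Folner_sub; auto).
  assert (HfP : L2 Psi f) by (apply L2f; auto).
  assert (HSP : Stable U f Psi d) by (apply Stable_comp; auto).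
  destruct (clip U f Psi h d PF HFP Hh HfP Hv) as [h' [Hh' [Hv' H3]]].
  exists (fun n => phi (s n)), h'. split. apply sub_comp; auto.
  change (fun N => Phi (phi (s N))) with Psi.
  assert (Hlow : forall g, U Psi g -> d <= normPhi Psi (fun n => Cminus (f n) (g n))).
  { intros g Hg. exact (HSP (fun n => n) sub_id g Hg). }
  split; auto. split; [|split; auto].
  - split. apply L2_minus; auto. eapply PF_L2; eauto.
    apply (orth U f Psi d h'); auto.
  - split.
    + intros x [g [Hg ->]]. simpl. pose proof (Hlow g Hg).
      assert (normPhi Psi (fun n => Cminus (f n) (h' n)) <= d) by (rewrite normPhi_sqv; apply sqrt_le_sq; auto).
      lra.
    + intros b Hb. apply Hb. exists h'. auto.
Qed.
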